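(* Let $\mathcal{X}$ be a finite set and let $\mu,\nu$ be probability distributions on $\mathcal{X}$ with $\mathrm{D}_\infty(\mu\|\nu)<\infty$. Let $\widetilde D\sim\mu^n$ and $\widehat D\sim\nu^m$ be datasets of $n$ and $m$ independent samples from $\mu$ and $\nu$ respectively, and let $\widehat{\mathcal{X}}=\{x\in\mathcal{X}: x\text{ appears in }\widehat D\}$ be the support of $\widehat D$. Let $Q$ be a finite set of statistical queries $q:\mathcal{X}\to[0,1]$ and let $\alpha,\beta>0$. If \[n\ge \frac{8}{\alpha^2}\log\left(\frac{4|Q|}{\beta}\right)\quad\text{and}\quad m\ge\left(\frac{32}{\alpha^2}e^{\mathrm{D}_2(\mu\|\nu)}+\frac{8}{3\alpha}e^{\mathrm{D}_\infty(\mu\|\nu)}\right)\log\left(\frac{4|Q|+4}{\beta}\right),\] then $\Pr\left[f_{\widetilde D,Q}(\widehat{\mathcal{X}})\le\alpha\right]\ge 1-\beta$.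
   Context: For a dataset $D=(x_1,\dots,x_k)\in\mathcal{X}^k$ and a query $q:\mathcal{X}\to[0,1]$, $q(D)=\frac1k\sum_{i}q(x_i)$. For a nonempty $S\subseteq\mathcal{X}$, the best mixture error is $f_{D,Q}(S)=\min_{\mu'\in\Delta(S)}\max_{q\in Q}\left|q(D)-\sum_{x\in S}\mu'_x q(x)\right|$, where $\Delta(S)$ is the set of probability distributions on $S$. Rényi divergences: $\mathrm{D}_2(\mu\|\nu)=\log\sum_{x\in\mathcal{X}}\mu(x)^2/\nu(x)$ and $\mathrm{D}_\infty(\mu\|\nu)=\log\max_{x:\mu(x)>0}\mu(x)/\nu(x)$ (in general $\mathrm{D}_\alpha(\mu\|\nu)=\frac{1}{\alpha-1}\log\sum_x\mu(x)^\alpha\nu(x)^{1-\alpha}$). *)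

(* Defs.v *)
From HB Require Import structures.
From mathcomp Require Import all_boot all_order all_algebra.
From mathcomp Require Import all_classical all_reals all_analysis.
Set Implicit Arguments. Unset Strict Implicit. Unset Printing Implicit Defensive.
Import Order.TTheory GRing.Theory Num.Theory.
Local Open Scope ring_scope.

Section Defs.
Variables (R : realType) (X : finType).

Definition is_distr (mu : {ffun X -> R}) : Prop :=
  (forall x, 0 <= mu x) /\ \sum_(x : X) mu x = 1.

Definition is_query (q : {ffun X -> R}) : Prop := forall x, 0 <= q x <= 1.

Definition qD (k : nat) (q : {ffun X -> R}) (D : k.-tuple X) : R :=
  (k%:R)^-1 * \sum_(i < k) q (tnth D i).

Definition mixture_on (S : {set X}) (w : {ffun X -> R}) : Prop :=
  (forall x, 0 <= w x) /\ (forall x, x \notin S -> w x = 0) /\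
  \sum_(x in S) w x = 1.

Definition mix_err (k : nat) (D : k.-tuple X) (Q : seq {ffun X -> R})
  (S : {set X}) (w : {ffun X -> R}) : R :=
  \big[Num.max/0]_(q <- Q) `| qD q D - \sum_(x in S) w x * q x |.

(* f_{D,Q}(S) = min over mixtures of the max error (as an infimum in \bar R;
   equal to the minimum, which is attained, for nonempty S) *)
Definition fDQ (k : nat) (D : k.-tuple X) (Q : seq {ffun X -> R})
  (S : {set X}) : \bar R :=
  ereal_inf [set (mix_err D Q S w)%:E | w in mixture_on S].

Definition D2 (mu nu : {ffun X -> R}) : R :=
  ln (\sum_(x : X) mu x ^+ 2 / nu x).

Definition Dinf (mu nu : {ffun X -> R}) : R :=
  ln (\big[Num.max/0]_(x : X | 0 < mu x) (mu x / nu x)).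

(* D_inf(mu||nu) < oo : nu(x) > 0 whenever mu(x) > 0 *)
Definition Dinf_finite (mu nu : {ffun X -> R}) : Prop :=
  forall x, 0 < mu x -> 0 < nu x.

Definition supp (k : nat) (D : k.-tuple X) : {set X} := [set x | x \in D].

Definition prob_good (n m : nat) (mu nu : {ffun X -> R})
  (Q : seq {ffun X -> R}) (alpha : R) : R :=
  \sum_(p : n.-tuple X * m.-tuple X | (fDQ p.1 Q (supp p.2) <= alpha%:E)%E)
     ((\prod_(i < n) mu (tnth p.1 i)) * (\prod_(j < m) nu (tnth p.2 j))).

End Defs.

(* Main.v *)
Require Import Defs.
From HB Require Import structures.
From mathcomp Require Import all_boot all_order all_algebra.
From mathcomp Require Import all_classical all_reals all_analysis.
From mathcomp Require Import ring lra.
Import Order.TTheory GRing.Theory Num.Theory.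
Local Open Scope ring_scope.
Local Open Scope classical_set_scope.
Local Open Scope classical_set_scope.
Section A.
Variable R : realType.

Let g (u : R) := (2 - u) * expR u - 2 - u.
Let dg (x : R) : is_derive x 1 g ((1 - x) * expR x - 1).
Proof.
  have -> : g = ((cst 2 - id) * expR - cst 2 - id)%R.
    by apply/funext => v; rewrite /g /=.
  apply: is_derive_eq.
  change ((2 - x) * expR x + expR x * (0 - 1) - 0 - 1 = (1 - x) * expR x - 1).
  ring.
Qed.
Let dg_le0 (x : R) : g^`() x <= 0.
Proof.
    rewrite derive1E (@derive_val _ _ _ _ _ _ _ (dg x)).
    have := expR_ge1Dx (- x); rewrite expRN => h.
    have ex := expR_gt0 x.
    have h2 : (1 - x) * expR x <= 1.
      by rewrite -[leRHS](mulVf (lt0r_neq0 ex)) ler_pM2r.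

    lra.
Qed.

Lemma g_pos (u : R) : 0 <= u -> g u <= 0.
Proof.
move=> u0.
have : g u <= g 0.
  apply: (@ler0_derive1_nincry _ g 0) => //.
  apply: derivable_within_continuous => x _; exact: ex_derive.
by rewrite /g expR0 => h; rewrite /g; lra.
Qed.

Lemma g_neg (u : R) : u <= 0 -> 0 <= g u.
Proof.
move=> u0.
have : g 0 <= g u.
  apply: (@ler0_derive1_nincrNy _ g 0) => //.
  apply: derivable_within_continuous => x _; exact: ex_derive.
by rewrite /g expR0 => h; rewrite /g; lra.
Qed.

Let h (y : R) := y ^+ 2 / 2 - (expR y - 1 - y) * (1 - y / 3).
Let dh (x : R) : is_derive x 1 h (- g x / 3).
Proof.
  have -> : h = (cst (2^-1) * (id * id) - (expR - cst 1 - id) * (cst 1 - cst (3^-1) * id))%R.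
    apply/funext => v; rewrite /h /= expr2.
    by rewrite !fctE /cst /=; ring.
  apply: is_derive_eq.
  rewrite /g !fctE /cst /= /GRing.scale /=.
  by field.
Qed.

Lemma expA (y : R) : (expR y - 1 - y) * (1 - y / 3) <= y ^+ 2 / 2.
Proof.
suff : h 0 <= h y by rewrite /h expR0; lra.
have [y0|y0] := leP 0 y.
  apply: (@ger0_derive1_ndecry _ h 0) => //.
  - move=> x; rewrite in_itv /= andbT => x0.
    rewrite derive1E (@derive_val _ _ _ _ _ _ _ (dh x)).
    have := @g_pos x (ltW x0); lra.
  - apply: derivable_within_continuous => x _; exact: ex_derive.
apply: (@ler0_derive1_nincrNy _ h 0) => //.
  - move=> x; rewrite in_itv /= => x0.
    rewrite derive1E (@derive_val _ _ _ _ _ _ _ (dh x)).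
    have := @g_neg x (ltW x0); lra.
  - apply: derivable_within_continuous => x _; exact: ex_derive.
  - exact: ltW.
Qed.

End A.
Section C.
Variables (R : realType) (X : finType).

Lemma sum_tuple_prod (k : nat) (F : X -> R) :
  \sum_(s : k.-tuple X) \prod_(i < k) F (tnth s i) = (\sum_x F x) ^+ k.
Proof.
rewrite (reindex (fun f : {ffun 'I_k -> X} => [tuple f i | i < k])) /=; last first.
  apply: onW_bij; exists (fun s : k.-tuple X => [ffun i => tnth s i]).
    by move=> f; apply/ffunP => i; rewrite ffunE tnth_mktuple.
  by move=> s; apply: eq_from_tnth => i; rewrite tnth_mktuple ffunE.
under eq_bigr => f _ do under eq_bigr => i _ do rewrite tnth_mktuple.
rewrite -(bigA_distr_bigA (fun (_ : 'I_k) x => F x)) /=.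
by rewrite prodr_const card_ord.
Qed.
End C.
Section D.
Variables (R : realType) (X : finType).





Lemma expB (v D y : R) : 0 < v -> 0 < D -> y <= 3 * (1 - v / D) ->
  expR y <= 1 + y + D / (2 * v) * y ^+ 2.
Proof.
move=> v0 D0 hy.
have E0 : 0 <= expR y - 1 - y by have := expR_ge1Dx y; lra.
have h1 : v / D <= 1 - y / 3 by lra.
have h2 : (expR y - 1 - y) * (v / D) <= y ^+ 2 / 2.
  apply: le_trans (@expA _ y); exact: ler_wpM2l.
have vD0 : 0 < v / D by apply: divr_gt0.
have : expR y - 1 - y <= y ^+ 2 / 2 / (v / D).
  by rewrite ler_pdivlMr.
have -> : y ^+ 2 / 2 / (v / D) = D / (2 * v) * y ^+ 2.
  by field; rewrite ?gt_eqF ?lt0r_neq0.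
lra.
Qed.

Lemma bern (p f : X -> R) (k : nat) (b v t : R) :
  (forall x, 0 <= p x) -> \sum_x p x = 1 -> (forall x, f x <= b) ->
  \sum_x p x * f x = 0 -> \sum_x p x * f x ^+ 2 <= v ->
  0 < v -> 0 < b -> 0 < t ->
  \sum_(s : k.-tuple X | k%:R * t <= \sum_(i < k) f (tnth s i))
     \prod_(i < k) p (tnth s i)
  <= expR (- (k%:R * t ^+ 2 / (2 * (v + b * t / 3)))).
Proof.
move=> p0 p1 fb f1 f2 v0 b0 t0.
set D := v + b * t / 3.
have D0 : 0 < D by rewrite /D; have := mulr_gt0 b0 t0; lra.
set lam := t / D.
have lam0 : 0 < lam by exact: divr_gt0.
apply: (@le_trans _ _ (\sum_(s : k.-tuple X) \prod_(i < k) p (tnth s i) *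
   expR (lam * (\sum_(i < k) f (tnth s i) - k%:R * t)))).
  rewrite big_mkcond /=; apply: ler_sum => s _.
  have P0 : 0 <= \prod_(i < k) p (tnth s i) by apply: prodr_ge0.
  case: ifP => H.
    rewrite -[leLHS]mulr1; apply: ler_wpM2l => //.
    have : 0 <= lam * (\sum_(i < k) f (tnth s i) - k%:R * t).
      by apply: mulr_ge0; [exact: ltW | rewrite subr_ge0].
    move=> h; have := expR_ge1Dx (lam * (\sum_(i < k) f (tnth s i) - k%:R * t)); lra.
  by apply: mulr_ge0 => //; exact: expR_ge0.
under eq_bigr => s _ do rewrite mulrBr expRD mulr_sumr expR_sum mulrA -big_split /=.
rewrite -mulr_suml (@sum_tuple_prod _ _ k (fun x => p x * expR (lam * f x))) mulrC.
set M := \sum_x _.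
have hM : M <= 1 + D / (2 * v) * lam ^+ 2 * v.
  apply: (@le_trans _ _ (\sum_x p x * (1 + lam * f x + D / (2 * v) * (lam * f x) ^+ 2))).
    apply: ler_sum => x _; apply: ler_wpM2l => //; apply: expB => //.
    have : lam * f x <= lam * b by apply: ler_wpM2l => //; exact: ltW.
    suff -> : 3 * (1 - v / D) = lam * b by [].
    rewrite /lam /D; field; apply: lt0r_neq0; have := mulr_gt0 b0 t0; lra.
  under eq_bigr => x _ do rewrite !mulrDr mulr1.
  rewrite !big_split /= p1.
  have E1 i : p i * (lam * f i) = lam * (p i * f i) by ring.
  have E2 i : p i * (D / (2 * v) * (lam * f i) ^+ 2) =
     (D / (2 * v) * lam ^+ 2) * (p i * f i ^+ 2) by ring.
  rewrite (eq_bigr _ (fun i _ => E1 i)) (eq_bigr _ (fun i _ => E2 i)).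
  rewrite -!mulr_sumr f1 mulr0 addr0 lerD2l; apply: ler_wpM2l => //.
  apply: mulr_ge0; last exact: sqr_ge0.
  apply: divr_ge0; [exact: ltW | apply: mulr_ge0 => //; exact: ltW].
have M0 : 0 <= M by apply: sumr_ge0 => x _; apply: mulr_ge0 => //; exact: expR_ge0.
apply: (@le_trans _ _ (expR (- (lam * (k%:R * t))) * expR (D / (2 * v) * lam ^+ 2 * v) ^+ k)).
  apply: ler_wpM2l; first exact: expR_ge0.
  apply: lerXn2r; rewrite ?nnegrE ?expR_ge0 //.
  have := expR_ge1Dx (D / (2 * v) * lam ^+ 2 * v); lra.
rewrite -expRM_natl -expRD ler_expR /lam /D.
rewrite le_eqVlt; apply/orP; left; apply/eqP.
field; rewrite lt0r_neq0 ?lt0r_neq0 //; have := mulr_gt0 b0 t0; lra.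
Qed.
End D.
Section F.
Variable R : realType.

Lemma expRNln (y : R) : 0 < y -> expR (- ln y) = y^-1.
Proof. by move=> y0; rewrite expRN lnK. Qed.

Lemma exp1 (n a b N : R) : 0 < a -> a < 1 -> 0 < b -> 1 <= N -> 0 <= n ->
  8 / a ^+ 2 * ln (4 * N / b) <= n ->
  expR (- (n * (a / 2) ^+ 2 / (2 * (1 / 4 + 1 * (a / 2) / 3)))) <= b / (4 * N).
Proof.
move=> a0 a1 b0 N1 n0 hn.
have y0 : 0 < 4 * N / b by apply: divr_gt0 => //; lra.
have -> : b / (4 * N) = expR (- ln (4 * N / b)).
  by rewrite expRNln // invf_div.
rewrite ler_expR lerN2.
set P := n * a ^+ 2.
have P0 : 0 <= P by apply: mulr_ge0 => //; exact: sqr_ge0.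
have a20 : 0 < a ^+ 2 by exact: exprn_gt0.
have h1 : ln (4 * N / b) <= P / 8.
  move: hn; rewrite mulrC -ler_pdivlMr; last by apply: divr_gt0.
  by rewrite /P invf_div mulrA [n * _]mulrC -mulrA mulrC.
apply: le_trans h1 _.
have -> : n * (a / 2) ^+ 2 / (2 * (1 / 4 + 1 * (a / 2) / 3)) = P / (2 + 4 * a / 3).
  by rewrite /P; field; lra.
rewrite ler_pdivrMr; last lra.
rewrite -(mulrA P) -[leLHS]mulr1; apply: ler_wpM2l => //.
rewrite mulrC ler_pdivlMr; lra.
Qed.

Lemma exp2 (m a S Mx L : R) : 0 < a -> 0 < S -> 0 < Mx ->
  (32 / a ^+ 2 * S + 8 / (3 * a) * Mx) * L <= m ->
  expR (- (m * (a / 4) ^+ 2 / (2 * (S + Mx * (a / 4) / 3)))) <= expR (- L).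
Proof.
move=> a0 S0 M0 hm.
rewrite ler_expR lerN2.
set K := 32 / a ^+ 2 * S + 8 / (3 * a) * Mx.
have K0 : 0 < K.
  rewrite /K; apply: addr_gt0; apply: mulr_gt0 => //; apply: divr_gt0 => //.
  - exact: exprn_gt0.
  - by apply: mulr_gt0.
have -> : m * (a / 4) ^+ 2 / (2 * (S + Mx * (a / 4) / 3)) = m / K.
  rewrite /K; field.
  have h := mulr_gt0 M0 a0.
  rewrite !lt0r_neq0 //; lra.
by rewrite (ler_pdivlMr _ _ K0) mulrC.
Qed.
End F.
Local Close Scope classical_set_scope.
Section Main.
Variables (R : realType) (X : finType) (mu nu : {ffun X -> R}).
Hypotheses (hmu : is_distr mu) (hnu : is_distr nu) (hfin : Dinf_finite mu nu).

Definition rr x := mu x / nu x.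

Lemma mu0 x : nu x = 0 -> mu x = 0.
Proof.
move=> h; have := hmu.1 x; rewrite le_eqVlt => /orP[/eqP <- //|/hfin].
by rewrite h ltxx.
Qed.

Lemma nu_r x : nu x * rr x = mu x.
Proof.
have [h|h] := eqVneq (nu x) 0; first by rewrite h mul0r mu0.
by rewrite /rr mulrC divfK.
Qed.

Lemma nu_r2 x : nu x * rr x ^+ 2 = mu x ^+ 2 / nu x.
Proof.
have [h|h] := eqVneq (nu x) 0; first by rewrite h mul0r invr0 mulr0.
by rewrite /rr; field.
Qed.

Lemma rr_ge0 x : 0 <= rr x.
Proof. by apply: divr_ge0; [exact: hmu.1 | exact: hnu.1]. Qed.

Lemma ex_mu : exists x, 0 < mu x.
Proof.
case: (pickP (fun x => 0 < mu x)) => [x hx|h0]; first by exists x.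
exfalso; have := hmu.2; rewrite big1 => [/eqP|x _]; first by rewrite eq_sym oner_eq0.
by have := hmu.1 x; rewrite le_eqVlt h0 orbF => /eqP <-.
Qed.

Definition Mx := \big[Num.max/0]_(x | 0 < mu x) (mu x / nu x).

Lemma rr_le x : rr x <= Mx.
Proof.
have [hx|hx] := ltP 0 (mu x); first exact: (le_bigmax_cond _ _ hx).
have -> : rr x = 0 by rewrite /rr (@le_anti _ _ (mu x) 0) ?hx ?hmu.1 ?mul0r.
have [x0 h0] := ex_mu.
by apply: le_trans (le_bigmax_cond _ _ h0); exact: rr_ge0.
Qed.

Lemma Mx_ge1 : 1 <= Mx.
Proof.
rewrite -hmu.2 -[leRHS]mul1r -hnu.2 mulr_suml; apply: ler_sum => x _.
by rewrite -nu_r; apply: ler_wpM2l; [exact: hnu.1 | exact: rr_le].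
Qed.

Lemma expDinf : expR (Dinf mu nu) = Mx.
Proof. by rewrite /Dinf lnK // posrE; apply: lt_le_trans Mx_ge1. Qed.

Definition S2 := \sum_(x : X) mu x ^+ 2 / nu x.

Lemma S2_gt0 : 0 < S2.
Proof.
have [x0 h0] := ex_mu.
rewrite /S2 (bigD1 x0) //=; apply: ltr_pwDl.
  by apply: divr_gt0; [exact: exprn_gt0 | exact: hfin].
apply: sumr_ge0 => x _; apply: divr_ge0; [exact: sqr_ge0 | exact: hnu.1].
Qed.

Lemma expD2 : expR (D2 mu nu) = S2.
Proof. by rewrite /D2 lnK // posrE; exact: S2_gt0. Qed.


Lemma tail_mu (g : X -> R) k t : (forall x, g x <= 1) ->
  \sum_x mu x * g x = 0 -> \sum_x mu x * g x ^+ 2 <= 1 / 4 -> 0 < t ->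
  \sum_(s : k.-tuple X | k%:R * t <= \sum_(i < k) g (tnth s i))
     \prod_(i < k) mu (tnth s i)
  <= expR (- (k%:R * t ^+ 2 / (2 * (1 / 4 + 1 * t / 3)))).
Proof.
move=> g1 g0 g2 t0.
apply: (@bern _ _ mu g k 1 (1/4) t) => //; first exact: hmu.1; first exact: hmu.2.
Qed.

Lemma tail_nu (g : X -> R) k t : (forall x, `|g x| <= 1) ->
  \sum_x mu x * g x = 0 -> 0 < t ->
  \sum_(s : k.-tuple X | k%:R * t <= \sum_(i < k) rr (tnth s i) * g (tnth s i))
     \prod_(i < k) nu (tnth s i)
  <= expR (- (k%:R * t ^+ 2 / (2 * (S2 + Mx * t / 3)))).
Proof.
move=> g1 g0 t0.
apply: (@bern _ _ nu (fun x => rr x * g x) k Mx S2 t) => //.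
- exact: hnu.1.
- exact: hnu.2.
- move=> x; apply: le_trans (rr_le x); rewrite -[leRHS]mulr1.
  by apply: ler_wpM2l; [exact: rr_ge0 | apply: le_trans (g1 x); exact: ler_norm].
- rewrite -[RHS]g0; apply: eq_bigr => x _ /=; by rewrite mulrA nu_r.
- rewrite /S2; apply: ler_sum => x _.
  rewrite exprMn mulrA nu_r2 -[leRHS]mulr1; apply: ler_wpM2l.
    by apply: divr_ge0; [exact: sqr_ge0 | exact: hnu.1].
  by rewrite -real_normK ?num_real // expr_le1.
- exact: S2_gt0.
- exact: lt_le_trans Mx_ge1.
Qed.

Lemma tail_Z k t : 0 < t ->
  \sum_(s : k.-tuple X | k%:R * t <= \sum_(i < k) (1 - rr (tnth s i)))
     \prod_(i < k) nu (tnth s i)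
  <= expR (- (k%:R * t ^+ 2 / (2 * (S2 + Mx * t / 3)))).
Proof.
move=> t0.
apply: (@bern _ _ nu (fun x => 1 - rr x) k Mx S2 t) => //.
- exact: hnu.1.
- exact: hnu.2.
- move=> x; apply: le_trans Mx_ge1; have := rr_ge0 x; lra.
- under eq_bigr => x _ do rewrite mulrBr mulr1 nu_r.
  by rewrite sumrB hmu.2 hnu.2 subrr.
- have E x : nu x * (1 - rr x) ^+ 2 = nu x - 2 * mu x + mu x ^+ 2 / nu x.
    by rewrite -nu_r2 -nu_r; ring.
  rewrite (eq_bigr _ (fun x _ => E x)) !big_split /= sumrN -mulr_sumr hmu.2 hnu.2 /S2.
  lra.
- exact: S2_gt0.
- exact: lt_le_trans Mx_ge1.
Qed.


Lemma sum_eq (a : X) (F : X -> R) : \sum_x (a == x)%:R * F x = F a.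
Proof.
rewrite (bigD1 a) //= eqxx mul1r big1 ?addr0 // => x /negbTE hx.
by rewrite eq_sym hx mul0r.
Qed.

Lemma sum_count (s : seq X) (F : X -> R) :
  \sum_(y <- s) F y = \sum_x (count_mem x s)%:R * F x.
Proof.
elim: s => [|a s IH]; first by rewrite big_nil big1 // => x _; rewrite mul0r.
rewrite big_cons IH /=.
under [RHS]eq_bigr => x _ do rewrite natrD mulrDl.
by rewrite big_split /= sum_eq.
Qed.

Lemma sum_tup k (t : k.-tuple X) (F : X -> R) :
  \sum_(j < k) F (tnth t j) = \sum_x (count_mem x t)%:R * F x.
Proof. by rewrite -sum_count big_tuple. Qed.

Lemma sum_supp k (t : k.-tuple X) (F : X -> R) :
  (forall x, x \notin t -> F x = 0) -> \sum_(x in supp t) F x = \sum_x F x.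
Proof.
move=> F0; rewrite [RHS](bigID (fun x => x \in supp t)) /= [X in _ = _ + X]big1 ?addr0 // => x.
by rewrite /supp inE => /F0.
Qed.

Lemma fDQ_le n k (s : n.-tuple X) (t : k.-tuple X) (Q : seq {ffun X -> R})
  (alpha : R) (w : {ffun X -> R}) :
  0 <= alpha -> mixture_on (supp t) w ->
  (forall q, q \in Q -> `|qD q s - \sum_(x in supp t) w x * q x| <= alpha) ->
  (fDQ s Q (supp t) <= alpha%:E)%E.
Proof.
move=> a0 hw hq.
apply: (@le_trans _ _ (mix_err s Q (supp t) w)%:E).
  by apply: ereal_inf_lbound; exists w.
rewrite lee_fin /mix_err big_seq; apply: bigmax_le => // q qQ.
Qed.


Definition cq (q : {ffun X -> R}) := \sum_x mu x * q x.

Lemma good_small n m (s : n.-tuple X) (t : m.-tuple X) (Q : seq {ffun X -> R})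
  (alpha : R) :
  0 < alpha -> alpha <= 2 ->
  (forall q, q \in Q ->
   [/\ \sum_(i < n) (q (tnth s i) - cq q) < n%:R * (alpha / 2),
       \sum_(i < n) (cq q - q (tnth s i)) < n%:R * (alpha / 2),
       \sum_(j < m) rr (tnth t j) * (q (tnth t j) - cq q) < m%:R * (alpha / 4) &
       \sum_(j < m) rr (tnth t j) * (cq q - q (tnth t j)) < m%:R * (alpha / 4)]) ->
  \sum_(j < m) (1 - rr (tnth t j)) < m%:R * (alpha / 4) ->
  (fDQ s Q (supp t) <= alpha%:E)%E.
Proof.
move=> a0 a2 hq hZ.
set Zs := \sum_(j < m) rr (tnth t j).
have hZ' : m%:R * (1 - alpha / 4) < Zs.
  move: hZ; rewrite sumrB sumr_const card_ord -/Zs; lra.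
have hm0 : 0 <= m%:R * (1 - alpha / 4) :> R.
  apply: mulr_ge0; [exact: ler0n | lra].
have Z0 : 0 < Zs by lra.
have hZ2 : m%:R * (alpha / 4) <= alpha / 2 * Zs.
  apply: (@le_trans _ _ (alpha / 2 * (m%:R * (1 - alpha / 4)))); last first.
    by apply: ler_wpM2l; [lra | exact: ltW].
  have -> : alpha / 2 * (m%:R * (1 - alpha / 4)) =
            m%:R * (alpha / 4) + m%:R * (alpha / 4) * (1 - alpha / 2) by field.
  rewrite lerDl; apply: mulr_ge0; [apply: mulr_ge0; [exact: ler0n|lra]|lra].
pose w := [ffun x => (count_mem x t)%:R * rr x / Zs].
have wout x : x \notin t -> w x = 0.
  by move=> /count_memPn hx; rewrite ffunE hx mul0r mul0r.
apply: (@fDQ_le n m s t Q alpha w); first exact: ltW.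
  split; first by move=> x; rewrite ffunE; apply: divr_ge0; [apply: mulr_ge0; [exact: ler0n|exact: rr_ge0]|exact: ltW].
  split; first by move=> x; rewrite /supp inE; exact: wout.
  rewrite sum_supp //.
  under eq_bigr => x _ do rewrite ffunE.
  by rewrite -mulr_suml -sum_tup divff // lt0r_neq0.
move=> q qQ.
have [h1 h2 h3 h4] := hq q qQ.
rewrite sum_supp => [|x /wout ->]; last by rewrite mul0r.
have Ew x : w x * q x = (count_mem x t)%:R * (rr x * q x) / Zs.
  by rewrite ffunE; ring.
rewrite (eq_bigr _ (fun x _ => Ew x)) -mulr_suml -(@sum_tup m t (fun x => rr x * q x)).
set Y := \sum_(j < m) _.
set a := \sum_(i < n) q (tnth s i).
have e1 : \sum_(i < n) (q (tnth s i) - cq q) = a - n%:R * cq q.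
  by rewrite sumrB sumr_const card_ord mulr_natl.
have e2 : \sum_(i < n) (cq q - q (tnth s i)) = n%:R * cq q - a.
  by rewrite sumrB sumr_const card_ord mulr_natl.
have e3 : \sum_(j < m) rr (tnth t j) * (q (tnth t j) - cq q) = Y - cq q * Zs.
  by rewrite /Y /Zs mulr_sumr -sumrB; apply: eq_bigr => j _; ring.
have e4 : \sum_(j < m) rr (tnth t j) * (cq q - q (tnth t j)) = cq q * Zs - Y.
  by rewrite /Y /Zs mulr_sumr -sumrB; apply: eq_bigr => j _; ring.
rewrite e1 in h1; rewrite e2 in h2; rewrite e3 in h3; rewrite e4 in h4.
have n0 : 0 < n%:R :> R.
  rewrite ltr0n lt0n; apply/negP => /eqP n0; move: h1 h2; rewrite n0 mul0r; lra.
have E1 : `|qD q s - cq q| <= alpha / 2.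
  have -> : qD q s - cq q = (a - n%:R * cq q) / n%:R.
    rewrite /qD -/a; field; exact: lt0r_neq0.
  rewrite normrM [`|_^-1|]ger0_norm ?invr_ge0 ?ler0n // ler_pdivrMr //.
  rewrite ler_norml; apply/andP; split; lra.
have E2 : `|cq q - Y / Zs| <= alpha / 2.
  have -> : cq q - Y / Zs = (cq q * Zs - Y) / Zs.
    field; exact: lt0r_neq0.
  rewrite normrM [`|_^-1|]ger0_norm ?invr_ge0 ?(ltW Z0) // ler_pdivrMr //.
  rewrite ler_norml; apply/andP; split; lra.
have := ler_normD (qD q s - cq q) (cq q - Y / Zs).
have -> : qD q s - cq q + (cq q - Y / Zs) = qD q s - Y / Zs by ring.
lra.
Qed.


Lemma qD01 n (q : {ffun X -> R}) (s : n.-tuple X) : is_query q -> 0 <= qD q s <= 1.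
Proof.
move=> hq; rewrite /qD.
have S0 : 0 <= \sum_(i < n) q (tnth s i) by apply: sumr_ge0 => i _; case/andP: (hq (tnth s i)).
have S1 : \sum_(i < n) q (tnth s i) <= n%:R.
  rewrite -[n in n%:R]card_ord -sumr_const; apply: ler_sum => i _.
  by case/andP: (hq (tnth s i)).
case: n s S0 S1 => [|n] s S0 S1; first by rewrite invr0 mul0r lexx ler01.
apply/andP; split; first by apply: mulr_ge0 => //; rewrite invr_ge0 ler0n.
by rewrite mulrC ler_pdivrMr ?mul1r // ltr0n.
Qed.

Lemma good_big n m (s : n.-tuple X) (t : m.-tuple X) (Q : seq {ffun X -> R})
  (alpha : R) :
  (forall q, q \in Q -> is_query q) -> 1 <= alpha -> (0 < m)%N ->
  (fDQ s Q (supp t) <= alpha%:E)%E.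
Proof.
move=> hQ a1 m0.
set t0 := tnth t (Ordinal m0).
pose w := [ffun x => (t0 == x)%:R : R].
have t0t : t0 \in t by exact: mem_tnth.
have wout x : x \notin t -> w x = 0.
  move=> hx; rewrite ffunE; case: eqP => // ex; by rewrite -ex t0t in hx.
apply: (@fDQ_le n m s t Q alpha w); first lra.
  split; first by move=> x; rewrite ffunE ler0n.
  split; first by move=> x; rewrite /supp inE; exact: wout.
  rewrite sum_supp //.
  under eq_bigr => x _ do rewrite ffunE -[_%:R]mulr1.
  by rewrite sum_eq.
move=> q qQ.
rewrite sum_supp => [|x /wout ->]; last by rewrite mul0r.
under eq_bigr => x _ do rewrite ffunE.
rewrite sum_eq.
have /andP[d0 d1] := @qD01 n q s (hQ q qQ).
have /andP[e0 e1] := hQ q qQ t0.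
rewrite ler_norml; apply/andP; split; lra.
Qed.


Lemma sum_seq_const (T : Type) (s : seq T) (c : R) : \sum_(x <- s) c = (size s)%:R * c.
Proof.
elim: s => [|a s IH]; first by rewrite big_nil mul0r.
by rewrite big_cons IH /= -add1n natrD mulrDl mul1r.
Qed.

Lemma sum_mu k : \sum_(s : k.-tuple X) \prod_(i < k) mu (tnth s i) = 1.
Proof. by rewrite (@sum_tuple_prod _ _ k mu) hmu.2 expr1n. Qed.

Lemma sum_nu k : \sum_(s : k.-tuple X) \prod_(i < k) nu (tnth s i) = 1.
Proof. by rewrite (@sum_tuple_prod _ _ k nu) hnu.2 expr1n. Qed.

Definition PP {n m} (p : n.-tuple X * m.-tuple X) :=
  (\prod_(i < n) mu (tnth p.1 i)) * (\prod_(j < m) nu (tnth p.2 j)).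

Lemma marg1 n m (b : pred (n.-tuple X)) :
  \sum_(p : n.-tuple X * m.-tuple X) PP p * (b p.1)%:R =
  \sum_(s | b s) \prod_(i < n) mu (tnth s i).
Proof.
rewrite -(pair_bigA _ (fun s t => PP (s, t) * (b s)%:R)) /= [RHS]big_mkcond /=.
apply: eq_bigr => s _.
under eq_bigr => t _ do rewrite /PP /= mulrAC.
rewrite -mulr_sumr sum_nu mulr1.
by case: (b s); rewrite ?mulr1 ?mulr0.
Qed.

Lemma marg2 n m (b : pred (m.-tuple X)) :
  \sum_(p : n.-tuple X * m.-tuple X) PP p * (b p.2)%:R =
  \sum_(t | b t) \prod_(j < m) nu (tnth t j).
Proof.
rewrite -(pair_bigA _ (fun s t => PP (s, t) * (b t)%:R)) /=.
under eq_bigr => s _ do under eq_bigr => t _ do rewrite /PP /= -mulrA.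
under eq_bigr => s _ do rewrite -mulr_sumr.
rewrite -mulr_suml sum_mu mul1r [RHS]big_mkcond /=.
by apply: eq_bigr => t _; case: (b t); rewrite ?mulr1 ?mulr0.
Qed.

Lemma PP_ge0 n m p : 0 <= @PP n m p.
Proof.
by apply: mulr_ge0; apply: prodr_ge0 => i _; [exact: hmu.1 | exact: hnu.1].
Qed.

Lemma sum_PP n m : \sum_(p : n.-tuple X * m.-tuple X) PP p = 1.
Proof.
have := @marg1 n m (fun _ : n.-tuple X => true).
under eq_bigr => p _ do rewrite mulr1.
by move=> ->; rewrite sum_mu.
Qed.


Lemma cq01 (q : {ffun X -> R}) : is_query q -> 0 <= cq q <= 1.
Proof.
move=> hq; apply/andP; split.
  by apply: sumr_ge0 => x _; apply: mulr_ge0; [exact: hmu.1 | case/andP: (hq x)].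
rewrite -hmu.2; apply: ler_sum => x _; rewrite -[leRHS]mulr1.
by apply: ler_wpM2l; [exact: hmu.1 | case/andP: (hq x)].
Qed.

Lemma mean0 (q : {ffun X -> R}) (e : R) : \sum_x mu x * (e * (q x - cq q)) = 0.
Proof.
have E x : mu x * (e * (q x - cq q)) = e * (mu x * q x) - e * cq q * mu x by ring.
by rewrite (eq_bigr _ (fun x _ => E x)) sumrB -!mulr_sumr hmu.2 mulr1 subrr.
Qed.

Lemma var14 (q : {ffun X -> R}) (e : R) : is_query q -> e ^+ 2 = 1 ->
  \sum_x mu x * (e * (q x - cq q)) ^+ 2 <= 1 / 4.
Proof.
move=> hq e2.
have E x : mu x * (e * (q x - cq q)) ^+ 2 =
   mu x * q x ^+ 2 - 2 * cq q * (mu x * q x) + cq q ^+ 2 * mu x.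
  by rewrite exprMn e2 mul1r; ring.
rewrite (eq_bigr _ (fun x _ => E x)) big_split sumrB /= -!mulr_sumr hmu.2 mulr1.
have h : \sum_x mu x * q x ^+ 2 <= cq q.
  apply: ler_sum => x _; apply: ler_wpM2l; first exact: hmu.1.
  by case/andP: (hq x) => h0 h1; rewrite expr2 -[leRHS]mul1r ler_wpM2r.
have := sqr_ge0 (cq q - 1 / 2); rewrite -/(cq q); lra.
Qed.

Lemma mean_a (q : {ffun X -> R}) : \sum_x mu x * (q x - cq q) = 0.
Proof.
have E x : mu x * (q x - cq q) = mu x * q x - cq q * mu x by ring.
by rewrite (eq_bigr _ (fun x _ => E x)) sumrB -!mulr_sumr hmu.2 mulr1 subrr.
Qed.

Lemma mean_b (q : {ffun X -> R}) : \sum_x mu x * (cq q - q x) = 0.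
Proof.
have E x : mu x * (cq q - q x) = cq q * mu x - mu x * q x by ring.
by rewrite (eq_bigr _ (fun x _ => E x)) sumrB -!mulr_sumr hmu.2 mulr1 subrr.
Qed.


Lemma var_a (q : {ffun X -> R}) : is_query q -> \sum_x mu x * (q x - cq q) ^+ 2 <= 1 / 4.
Proof.
move=> hq; have := @var14 q 1 hq (expr1n _ _).
by under eq_bigr do rewrite mul1r.
Qed.

Lemma var_b (q : {ffun X -> R}) : is_query q -> \sum_x mu x * (cq q - q x) ^+ 2 <= 1 / 4.
Proof.
move=> hq; have := @var_a q hq.
by under eq_bigr do rewrite -sqrrN opprB.
Qed.

Lemma main_sec n m (Q : seq {ffun X -> R}) (alpha beta : R) :
  uniq Q -> (forall q, q \in Q -> is_query q) -> 0 < alpha -> 0 < beta ->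
  n%:R >= 8 / alpha ^+ 2 * ln (4 * (size Q)%:R / beta) ->
  m%:R >= (32 / alpha ^+ 2 * expR (D2 mu nu) + 8 / (3 * alpha) * expR (Dinf mu nu))
          * ln ((4 * (size Q)%:R + 4) / beta) ->
  prob_good n m mu nu Q alpha >= 1 - beta.
Proof.
move=> uQ hQ a0 b0 hn hm.
rewrite expD2 expDinf in hm.
have Pge := @PP_ge0 n m.
pose good := fun p : n.-tuple X * m.-tuple X => (fDQ p.1 Q (supp p.2) <= alpha%:E)%E.
have -> : prob_good n m mu nu Q alpha = \sum_(p | good p) PP p by [].
have tot := @sum_PP n m; rewrite (bigID good) /= in tot.
have Sg0 : 0 <= \sum_(p | good p) PP p by apply: sumr_ge0.
suff hbad : \sum_(p | ~~ good p) PP p <= beta by lra.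
have [b1|b1] := leP 1 beta.
  have : 0 <= \sum_(p | good p) PP p by apply: sumr_ge0.
  lra.
set N := ((size Q)%:R : R).
have N0 : 0 <= N by exact: ler0n.
have L0 : 0 < ln ((4 * N + 4) / beta).
  apply: ln_gt0; rewrite ltr_pdivlMr //; lra.
set L := ln _ in hm L0.
have S20 := S2_gt0; have M1 := Mx_ge1.
have K0 : 0 < 32 / alpha ^+ 2 * S2 + 8 / (3 * alpha) * Mx.
  apply: addr_gt0; apply: mulr_gt0; try lra; apply: divr_gt0 => //.
  - exact: exprn_gt0.
  - by apply: mulr_gt0.
have [a1|a1] := leP 1 alpha.
  have m0 : (0 < m)%N.
    rewrite -(ltr0n R); apply: lt_le_trans hm; exact: mulr_gt0.
  rewrite big1 ?ltW // => p.
  by rewrite /good (@good_big n m p.1 p.2 Q alpha hQ a1 m0).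
pose E1 (q : {ffun X -> R}) (s : n.-tuple X) :=
  n%:R * (alpha / 2) <= \sum_(i < n) (q (tnth s i) - cq q).
pose E2 (q : {ffun X -> R}) (s : n.-tuple X) :=
  n%:R * (alpha / 2) <= \sum_(i < n) (cq q - q (tnth s i)).
pose E3 (q : {ffun X -> R}) (t : m.-tuple X) :=
  m%:R * (alpha / 4) <= \sum_(j < m) rr (tnth t j) * (q (tnth t j) - cq q).
pose E4 (q : {ffun X -> R}) (t : m.-tuple X) :=
  m%:R * (alpha / 4) <= \sum_(j < m) rr (tnth t j) * (cq q - q (tnth t j)).
pose E5 (t : m.-tuple X) := m%:R * (alpha / 4) <= \sum_(j < m) (1 - rr (tnth t j)).
pose I (p : n.-tuple X * m.-tuple X) : R :=
  \sum_(q <- Q) ((E1 q p.1)%:R + (E2 q p.1)%:R + (E3 q p.2)%:R + (E4 q p.2)%:R)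
  + (E5 p.2)%:R.
have I0 p : 0 <= I p.
  by apply: addr_ge0; [apply: sumr_ge0 => q _; rewrite -!natrD ler0n | exact: ler0n].
have Ibad p : ~~ good p -> 1 <= I p.
  move=> hb; case e5: (E5 p.2).
    by rewrite /I e5 lerDr; apply: sumr_ge0 => q _; rewrite -!natrD ler0n.
  case hh: (has (fun q => [|| E1 q p.1, E2 q p.1, E3 q p.2 | E4 q p.2]) Q).
    move/hasP: hh => [q0 qQ hq].
    rewrite /I (bigD1_seq q0) //=.
    have h2 : 0 <= \sum_(i <- Q | i != q0)
       ((E1 i p.1)%:R + (E2 i p.1)%:R + (E3 i p.2)%:R + (E4 i p.2)%:R :> R).
      by apply: sumr_ge0 => q' _; rewrite -!natrD ler0n.
    have h3 : 0 <= (E5 p.2)%:R :> R by exact: ler0n.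
    have h1 : 1 <= (E1 q0 p.1)%:R + (E2 q0 p.1)%:R + (E3 q0 p.2)%:R + (E4 q0 p.2)%:R :> R.
      rewrite -!natrD ler1n.
      by move: hq; case: (E1 q0 p.1); case: (E2 q0 p.1); case: (E3 q0 p.2); case: (E4 q0 p.2).
    lra.
  exfalso; move/negP: hb; apply.
  apply: (@good_small n m p.1 p.2 Q alpha) => //; first lra.
    move=> q qQ; move/hasPn: hh => /(_ q qQ).
    rewrite !negb_or => /and4P[h1 h2 h3 h4].
    by split; rewrite ltNge.
  by rewrite ltNge; apply/negbT.
apply: (@le_trans _ _ (\sum_p PP p * I p)).
  apply: (@le_trans _ _ (\sum_(p | ~~ good p) PP p * I p)).
    apply: ler_sum => p hp; rewrite -[leLHS]mulr1; apply: ler_wpM2l => //; exact: Ibad.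
  rewrite [leRHS](bigID (fun p => ~~ good p)) /= lerDl; apply: sumr_ge0 => p _.
  exact: mulr_ge0.
pose TT := (n.-tuple X * m.-tuple X)%type.
have eI : \sum_(p : TT) PP p * I p = \sum_(q <- Q) (\sum_(p : TT) PP p * (E1 q p.1)%:R +
   \sum_(p : TT) PP p * (E2 q p.1)%:R + \sum_(p : TT) PP p * (E3 q p.2)%:R +
   \sum_(p : TT) PP p * (E4 q p.2)%:R) + \sum_(p : TT) PP p * (E5 p.2)%:R.
  have eq1 (p : TT) : PP p * I p = \sum_(q <- Q) (PP p * (E1 q p.1)%:R + PP p * (E2 q p.1)%:R
      + PP p * (E3 q p.2)%:R + PP p * (E4 q p.2)%:R) + PP p * (E5 p.2)%:R.
    rewrite /I mulrDr mulr_sumr; congr (_ + _).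
    by apply: eq_bigr => q _; rewrite !mulrDr.
  rewrite (eq_bigr _ (fun p _ => eq1 p)) big_split exchange_big; congr (_ + _).
  by apply: eq_bigr => q _; rewrite !big_split.
rewrite eI (@marg2 n m E5).
under eq_bigr => q _ do rewrite (@marg1 n m (E1 q)) (@marg1 n m (E2 q))
  (@marg2 n m (E3 q)) (@marg2 n m (E4 q)).
set X1 := beta / (4 * N).
set X2 := beta / (4 * N + 4).
have a4 : 0 < alpha / 4 by lra.
have eL : expR (- L) = X2.
  by rewrite expRNln ?invf_div //; apply: divr_gt0 => //; lra.
have T5 : \sum_(t | E5 t) \prod_(j < m) nu (tnth t j) <= X2.
  rewrite -eL; apply: le_trans (@tail_Z m (alpha / 4) a4) _.
  by apply: exp2 => //; lra.
have Tq : forall q, q \in Q ->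
   \sum_(s | E1 q s) \prod_(i < n) mu (tnth s i) +
   \sum_(s | E2 q s) \prod_(i < n) mu (tnth s i) +
   \sum_(t | E3 q t) \prod_(j < m) nu (tnth t j) +
   \sum_(t | E4 q t) \prod_(j < m) nu (tnth t j) <= 2 * X1 + 2 * X2.
  move=> q qQ; have hq := hQ q qQ; have /andP[c0 c1] := @cq01 q hq.
  have N1 : 1 <= N.
    rewrite /N ler1n lt0n size_eq0; apply/eqP => Q0; by rewrite Q0 in qQ.
  have e1b := @exp1 R n%:R alpha beta N a0 a1 b0 N1 (ler0n _ _) hn.
  have e2b : expR (- (m%:R * (alpha / 4) ^+ 2 / (2 * (S2 + Mx * (alpha / 4) / 3))))
      <= X2 by rewrite -eL; apply: exp2 => //; lra.
  have a2 : 0 < alpha / 2 by lra.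
  have T1 : \sum_(s | E1 q s) \prod_(i < n) mu (tnth s i) <= X1.
    apply: le_trans (@tail_mu (fun x => q x - cq q) n (alpha / 2) _ _ _ a2) e1b.
    - by move=> x; case/andP: (hq x) => h0 h1; lra.
    - exact: (mean_a q).
    - exact: (@var_a q hq).
  have T2 : \sum_(s | E2 q s) \prod_(i < n) mu (tnth s i) <= X1.
    apply: le_trans (@tail_mu (fun x => cq q - q x) n (alpha / 2) _ _ _ a2) e1b.
    - by move=> x; case/andP: (hq x) => h0 h1; lra.
    - exact: (mean_b q).
    - exact: (@var_b q hq).
  have T3 : \sum_(t | E3 q t) \prod_(j < m) nu (tnth t j) <= X2.
    apply: le_trans (@tail_nu (fun x => q x - cq q) m (alpha / 4) _ _ a4) e2b.
    - by move=> x; case/andP: (hq x) => h0 h1; rewrite ler_norml; apply/andP; split; lra.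
    - exact: (mean_a q).
  have T4 : \sum_(t | E4 q t) \prod_(j < m) nu (tnth t j) <= X2.
    apply: le_trans (@tail_nu (fun x => cq q - q x) m (alpha / 4) _ _ a4) e2b.
    - by move=> x; case/andP: (hq x) => h0 h1; rewrite ler_norml; apply/andP; split; lra.
    - exact: (mean_b q).
  lra.
rewrite big_seq.
apply: le_trans (lerD (ler_sum _ Tq) T5) _.
rewrite -big_seq sum_seq_const -/N.
have X20 : 0 <= X2 by apply: divr_ge0; lra.
have eX2 : X2 * (2 * N + 2) = beta / 2 by rewrite /X2; field; lra.
have [N0'|N0'] := eqVneq N 0.
  rewrite N0' mul0r add0r; have : X2 * 2 = beta / 2 by rewrite -eX2 N0' mulr0 add0r.
  lra.
have eX1 : N * (2 * X1) = beta / 2 by rewrite /X1; field; lra.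
have : N * (2 * X1 + 2 * X2) + X2 = beta / 2 + X2 * (2 * N + 1).
  by rewrite mulrDr eX1; ring.
move=> ->.
have : X2 * (2 * N + 1) <= X2 * (2 * N + 2) by apply: ler_wpM2l => //; lra.
lra.
Qed.

End Main.

Theorem mainTheorem2 (R : realType) (X : finType) (mu nu : {ffun X -> R})
  (n m : nat) (Q : seq {ffun X -> R}) (alpha beta : R) :
  is_distr mu -> is_distr nu -> Dinf_finite mu nu ->
  uniq Q -> (forall q, q \in Q -> is_query q) ->
  0 < alpha -> 0 < beta ->
  n%:R >= 8 / alpha ^+ 2 * ln (4 * (size Q)%:R / beta) ->
  m%:R >= (32 / alpha ^+ 2 * expR (D2 mu nu) + 8 / (3 * alpha) * expR (Dinf mu nu))
          * ln ((4 * (size Q)%:R + 4) / beta) ->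
  prob_good n m mu nu Q alpha >= 1 - beta.
Proof.
move=> hmu hnu hfin; exact: (@main_sec R X mu nu hmu hnu hfin n m Q alpha beta).
Qed.
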